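(* Let $\varphi:(0,1]\to[0,1]$ be an increasing submultiplicative function (i.e. $\varphi(xy)\le\varphi(x)\varphi(y)$ for $x,y\in(0,1]$). The following are equivalent: (1) there exists $\lambda\in(0,1)$ with $\varphi(\lambda)<1$; (2) there is $C>0$ with $\varphi(x)\le C(1+\log(1/x))^{-1}$ for all $x\in(0,1]$; (3) for every $p>0$ there is $C_p>0$ with $\varphi(x)\le C_p(1+\log(1/x))^{-p}$ for all $x\in(0,1]$; (4) $\lim_{x\to0}\varphi(x)=0$. *)

(* Defs.v *)
From Stdlib Require Export Reals.
Open Scope R_scope.

(* phi : (0,1] -> [0,1], modelled as a total function R -> R whose
   relevant properties are only required on (0,1]. *)
Definition maps_into_unit (phi : R -> R) : Prop :=
  forall x, 0 < x <= 1 -> 0 <= phi x <= 1.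

Definition increasing_on_01 (phi : R -> R) : Prop :=
  forall x y, 0 < x <= 1 -> 0 < y <= 1 -> x <= y -> phi x <= phi y.

Definition submultiplicative_on_01 (phi : R -> R) : Prop :=
  forall x y, 0 < x <= 1 -> 0 < y <= 1 -> phi (x * y) <= phi x * phi y.

Definition tends_to_0_at_0 (phi : R -> R) : Prop :=
  forall eps, 0 < eps -> exists delta, 0 < delta /\
    forall x, 0 < x <= 1 -> x < delta -> Rabs (phi x) < eps.

(* Main.v *)
Require Import Defs.
From Stdlib Require Import Reals Lra Lia.
Open Scope R_scope.

Lemma ln_le_sub1 y : 0 < y -> ln y <= y - 1.
Proof. intro H. pose proof (exp_ineq1_le (ln y)). rewrite exp_ln in H0; lra. Qed.

Lemma ln_neg y : 0 < y < 1 -> ln y < 0.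
Proof. intro H. rewrite <- ln_1. apply ln_increasing; lra. Qed.

Lemma exp_le a b : a <= b -> exp a <= exp b.
Proof. intro H. destruct (Req_dec a b). subst; lra. left; apply exp_increasing; lra. Qed.

Lemma pow_le_one l n : 0 <= l <= 1 -> l ^ n <= 1.
Proof. intro H. rewrite <- (pow1 n). apply pow_incr; lra. Qed.

Lemma key (phi : R -> R) (Hrange : maps_into_unit phi)
  (Hsub : submultiplicative_on_01 phi) lam a (Hl : 0 < lam < 1) (Ha : 0 < a < 1)
  (Hpa : phi lam <= a) :
  forall x, 0 < x <= 1 -> phi x <= exp ((ln a / ln lam) * ln x) / a.
Proof.
  set (b := ln a / ln lam).
  assert (Lneg : ln lam < 0) by (apply ln_neg; lra).
  assert (Aneg : ln a < 0) by (apply ln_neg; lra).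
  assert (bpos : 0 < b) by (unfold b; unfold Rdiv; pose proof (Rinv_lt_0_compat (ln lam) Lneg); nra).
  assert (bl : b * ln lam = ln a) by (unfold b; field; lra).
  assert (Q : forall n x, lam ^ S n < x <= 1 -> phi x <= exp (b * ln x) / a).
  { induction n as [|n IH]; intros x Hx.
    - simpl in Hx. rewrite Rmult_1_r in Hx.
      assert (ln lam < ln x) by (apply ln_increasing; lra).
      assert (exp (ln a) < exp (b * ln x)).
      { apply exp_increasing. rewrite <- bl. apply Rmult_lt_compat_l; lra. }
      rewrite exp_ln in H0 by lra.
      pose proof (Hrange x ltac:(lra)).
      apply Rle_trans with 1; [lra|].
      apply Rmult_le_reg_r with a; [lra|]. unfold Rdiv. rewrite Rmult_assoc, Rinv_l by lra. lra.
    - assert (Hp : 0 < lam ^ S n) by (apply pow_lt; lra).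
      destruct (Rlt_le_dec (lam ^ S n) x) as [Hlt|Hge].
      + apply IH; lra.
      + set (y := x / lam).
        assert (Hxy : x = lam * y) by (unfold y; field; lra).
        assert (Hy1 : lam ^ S n < y).
        { unfold y. apply Rmult_lt_reg_l with lam; [lra|].
          replace (lam * (x / lam)) with x by (field; lra). simpl in Hx |- *. lra. }
        assert (Hy2 : y <= 1).
        { unfold y. apply Rmult_le_reg_l with lam; [lra|].
          replace (lam * (x / lam)) with x by (field; lra).
          pose proof (pow_le_one lam n ltac:(lra)). simpl in Hge.
          assert (lam * lam ^ n <= lam * 1) by (apply Rmult_le_compat_l; lra). lra. }
        assert (Hx0 : 0 < x) by (pose proof (pow_lt lam (S (S n)) ltac:(lra)); lra).
        assert (Hy0 : 0 < y) by lra.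
        pose proof (IH y (conj Hy1 Hy2)) as Hy.
        pose proof (Hsub lam y ltac:(lra) ltac:(lra)) as Hs.
        rewrite <- Hxy in Hs.
        pose proof (Hrange y ltac:(lra)).
        pose proof (Hrange lam ltac:(lra)).
        assert (phi lam * phi y <= a * (exp (b * ln y) / a)).
        { apply Rmult_le_compat; lra. }
        replace (a * (exp (b * ln y) / a)) with (exp (b * ln y)) in H1 by (field; lra).
        replace (exp (b * ln x) / a) with (exp (b * ln y)). lra.
        rewrite Hxy, ln_mult by lra. rewrite Rmult_plus_distr_l, bl, exp_plus, exp_ln by lra.
        field; lra. }
  intros x Hx.
  destruct (pow_lt_1_zero lam ltac:(rewrite Rabs_right; lra) x ltac:(lra)) as [N HN].
  apply (Q N). split; [|lra].
  specialize (HN (S N) ltac:(lia)). rewrite Rabs_right in HN. lra.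
  left; apply pow_lt; lra.
Qed.

Theorem corollary2p2 (phi : R -> R)
  (Hrange : maps_into_unit phi)
  (Hincr : increasing_on_01 phi)
  (Hsub : submultiplicative_on_01 phi) :
  let P1 := exists lam, 0 < lam < 1 /\ phi lam < 1 in
  let P2 := exists C, 0 < C /\
      forall x, 0 < x <= 1 -> phi x <= C * / (1 + ln (1 / x)) in
  let P3 := forall p, 0 < p -> exists Cp, 0 < Cp /\
      forall x, 0 < x <= 1 -> phi x <= Cp * Rpower (1 + ln (1 / x)) (- p) in
  let P4 := tends_to_0_at_0 phi in
  (P1 <-> P2) /\ (P1 <-> P3) /\ (P1 <-> P4).
Proof.
  intros P1 P2 P3 P4.
  assert (lnpos : forall x, 0 < x <= 1 -> 0 <= ln (1 / x)).
  { intros x Hx. unfold Rdiv. rewrite Rmult_1_l, ln_Rinv by lra.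
    destruct (Req_dec x 1). subst; rewrite ln_1; lra.
    pose proof (ln_neg x ltac:(lra)). lra. }
  assert (H13 : P1 -> P3).
  { intros [lam [Hl Hp]] p Hp0.
    set (a := Rmax (phi lam) (1/2)).
    assert (Ha : 0 < a < 1) by (unfold a; unfold Rmax; destruct Rle_dec; lra).
    assert (Hpa : phi lam <= a) by (unfold a; apply Rmax_l).
    pose proof (key phi Hrange Hsub lam a Hl Ha Hpa) as K.
    set (b := ln a / ln lam).
    assert (Lneg : ln lam < 0) by (apply ln_neg; lra).
    assert (Aneg : ln a < 0) by (apply ln_neg; lra).
    assert (bpos : 0 < b) by (unfold b; unfold Rdiv; pose proof (Rinv_lt_0_compat (ln lam) Lneg); nra).
    set (M := p / b).
    assert (Mpos : 0 < M) by (unfold M; unfold Rdiv; apply Rmult_lt_0_compat; [lra | apply Rinv_0_lt_compat; lra]).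
    exists (exp (p * ln M + b - p) / a). split.
    { unfold Rdiv; apply Rmult_lt_0_compat; [apply exp_pos | apply Rinv_0_lt_compat; lra]. }
    intros x Hx. specialize (K x Hx). fold b in K.
    set (s := ln (1 / x)).
    assert (Hs : 0 <= s) by (apply lnpos; auto).
    assert (lnx : ln x = - s).
    { unfold s. unfold Rdiv. rewrite Rmult_1_l, ln_Rinv by lra. ring. }
    rewrite lnx in K.
    unfold Rpower.
    apply Rle_trans with (1 := K).
    replace (exp (p * ln M + b - p) / a * exp (- p * ln (1 + s)))
      with (exp (p * ln M + b - p + - p * ln (1 + s)) / a)
      by (rewrite exp_plus; field; lra).
    unfold Rdiv. apply Rmult_le_compat_r; [left; apply Rinv_0_lt_compat; lra|].
    apply exp_le.
    pose proof (ln_le_sub1 ((1 + s) / M) ltac:(unfold Rdiv; apply Rmult_lt_0_compat; [lra|apply Rinv_0_lt_compat; lra])) as L.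
    unfold Rdiv in L. rewrite ln_mult in L by (try lra; apply Rinv_0_lt_compat; lra).
    rewrite ln_Rinv in L by lra.
    assert (p * (ln (1 + s) + - ln M) <= p * ((1 + s) * / M - 1)) by (apply Rmult_le_compat_l; lra).
    assert (p * ((1 + s) * / M - 1) = b * (1 + s) - p) by (unfold M; field; lra).
    nra. }
  assert (H32 : P3 -> P2).
  { intros H. destruct (H 1 ltac:(lra)) as [C [HC HCx]]. exists C; split; auto.
    intros x Hx. specialize (HCx x Hx). rewrite Rpower_Ropp, Rpower_1 in HCx; auto.
    pose proof (lnpos x Hx); lra. }
  assert (H24 : P2 -> P4).
  { intros [C [HC HCx]] eps Heps. exists (exp (- (C / eps))). split; [apply exp_pos|].
    intros x Hx Hxd. specialize (HCx x Hx).
    pose proof (Hrange x Hx). rewrite Rabs_right by lra.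
    assert (ln x < - (C / eps)).
    { rewrite <- (ln_exp (- (C/eps))). apply ln_increasing; lra. }
    assert (ln (1/x) = - ln x) by (unfold Rdiv; rewrite Rmult_1_l, ln_Rinv; lra).
    rewrite H1 in HCx.
    assert (C / eps < 1 + - ln x) by lra.
    assert (0 < C / eps) by (unfold Rdiv; apply Rmult_lt_0_compat; [lra | apply Rinv_0_lt_compat; lra]).
    assert (C * / (1 + - ln x) < eps).
    { apply Rmult_lt_reg_r with (1 + - ln x); [lra|].
      rewrite Rmult_assoc, Rinv_l by lra.
      apply Rmult_lt_reg_r with (/ eps). apply Rinv_0_lt_compat; lra.
      replace (eps * (1 + - ln x) * / eps) with (1 + - ln x) by (field; lra).
      rewrite Rmult_1_r. exact H2. }
    lra. }
  assert (H41 : P4 -> P1).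
  { intros H. destruct (H (1/2) ltac:(lra)) as [d [Hd Hdx]].
    exists (Rmin (d/2) (1/2)).
    assert (0 < Rmin (d/2) (1/2) <= 1/2) by (unfold Rmin; destruct Rle_dec; lra).
    assert (Rmin (d/2) (1/2) <= d/2) by apply Rmin_l.
    split; [lra|]. specialize (Hdx (Rmin (d/2) (1/2)) ltac:(lra) ltac:(lra)).
    pose proof (Rle_abs (phi (Rmin (d / 2) (1 / 2)))). lra. }
  tauto.
Qed.
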